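(* Let $F$ be an almost-bipartite graph, let $b$ be an integer with $b>|F|$, and let $H$ be a graph. Then $H\vee bK_1$ is $F$-free if and only if $H\in\mathcal{M}_F$.
   Context: All graphs are finite and simple. $H\vee bK_1$ is the join of $H$ with an independent set of $b$ vertices (every vertex of $H$ adjacent to every one of the $b$ new vertices). A graph $F$ is almost-bipartite if it can be made bipartite by removing at most one edge. For such $F$, $\mathcal{A}_F$ is the family of subgraphs of $F$ induced by $V(F)\setminus I$, where $I$ ranges over all maximal independent sets of $F$; $\mathcal{M}_F$ is the family of all graphs (possibly with isolated vertices) containing no subgraph isomorphic to a member of $\mathcal{A}_F$. $F$-free means no subgraph isomorphic to $F$; $|F|$ is the number of vertices of $F$. *)

(* Defs.v *)
From mathcomp Require Import all_boot.
Set Implicit Arguments. Unset Strict Implicit. Unset Printing Implicit Defensive.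

Record sgraph := SGraph {
  vert : finType;
  adj : rel vert;
  adj_sym : forall x y, adj x y = adj y x;
  adj_irr : irreflexive adj }.

Definition subgraph_of (F G : sgraph) : Prop :=
  exists f : vert F -> vert G, injective f /\
    forall x y, adj x y -> adj (f x) (f y).

Definition Ffree (F G : sgraph) : Prop := ~ subgraph_of F G.

Definition join_adj (H : sgraph) (b : nat) : rel (vert H + 'I_b)%type :=
  fun u v => match u, v with
  | inl x, inl y => adj x y
  | inl _, inr _ => true
  | inr _, inl _ => true
  | inr _, inr _ => false
  end.

Lemma join_adj_sym H b x y : @join_adj H b x y = join_adj y x.
Proof. by case: x; case: y => //= *; rewrite adj_sym. Qed.

Lemma join_adj_irr H b : irreflexive (@join_adj H b).
Proof. by case => //= x; rewrite adj_irr. Qed.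

Definition join_indep (H : sgraph) (b : nat) : sgraph :=
  SGraph (@join_adj_sym H b) (@join_adj_irr H b).

Definition ind_adj (G : sgraph) (S : {set vert G}) : rel {x : vert G | x \in S} :=
  fun u v => adj (val u) (val v).

Lemma ind_adj_sym G S x y : @ind_adj G S x y = ind_adj y x.
Proof. by rewrite /ind_adj adj_sym. Qed.

Lemma ind_adj_irr G S : irreflexive (@ind_adj G S).
Proof. by move=> x; rewrite /ind_adj adj_irr. Qed.

Definition induced (G : sgraph) (S : {set vert G}) : sgraph :=
  SGraph (@ind_adj_sym G S) (@ind_adj_irr G S).

Definition independent (G : sgraph) (I : {set vert G}) : Prop :=
  forall x y, x \in I -> y \in I -> ~~ adj x y.

Definition maximal_independent (G : sgraph) (I : {set vert G}) : Prop :=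
  independent I /\
  forall J : {set vert G}, independent J -> I \subset J -> J = I.

(* Almost bipartite: removing at most one edge {u,v} leaves a bipartite graph,
   i.e. there is a 2-colouring whose only possible monochromatic edge is uv. *)
Definition almost_bipartite (F : sgraph) : Prop :=
  exists (c : vert F -> bool) (u v : vert F),
    forall x y, adj x y -> c x = c y ->
      (x = u /\ y = v) \/ (x = v /\ y = u).

(* A_F membership witnessed by a maximal independent set I: F[V(F) \ I]. *)
(* M_F: graphs containing no subgraph isomorphic to a member of A_F. *)
Definition in_MF (F H : sgraph) : Prop :=
  forall I : {set vert F}, maximal_independent I ->
    ~ subgraph_of (induced (~: I)) H.

(* Main.v *)
Require Import Defs.
From mathcomp Require Import all_boot.
From Stdlib Require Import Classical.
Set Implicit Arguments. Unset Strict Implicit. Unset Printing Implicit Defensive.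

Definition indepb (G : sgraph) (I : {set vert G}) : bool :=
  [forall x in I, forall y in I, ~~ adj x y].

Lemma indepbP (G : sgraph) (I : {set vert G}) : reflect (independent I) (indepb I).
Proof.
apply: (iffP forall_inP) => [h x y xI yI | h x xI].
  by have /forall_inP := h x xI; apply.
by apply/forall_inP => y yI; apply: h.
Qed.

Lemma dir1 (F H : sgraph) (b : nat) :
  #|vert F| < b -> subgraph_of F (join_indep H b) -> ~ in_MF F H.
Proof.
move=> hb [f [finj fadj]] hM.
pose J := [set x | if f x is inr _ then true else false].
have /maxset_exists [I mI JI] : indepb J.
  apply/indepbP => x y; rewrite !inE => hx hy; apply/negP => /fadj.
  by case: (f x) hx => // i _; case: (f y) hy.
move/maxsetP: mI => [/indepbP Iind Imax].
have Imi : maximal_independent I.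
  split => // K Kind IK; apply: Imax => //; exact/indepbP.
apply: (hM I Imi).
have ex : forall s : {x | x \in ~: I}, exists h, f (val s) == inl h.
  case=> x /=; rewrite inE => xI.
  have xJ : x \notin J by apply: contra xI; apply: (subsetP JI).
  move: xJ; rewrite inE; case: (f x) => // h _; by exists h.
exists (fun s => xchoose (ex s)); split.
  move=> s t e.
  have := xchooseP (ex s); have := xchooseP (ex t); rewrite -e => /eqP <- /eqP.
  by move/finj; apply: val_inj.
move=> s t; rewrite /= /ind_adj => /fadj.
have es := eqP (xchooseP (ex s)); have et := eqP (xchooseP (ex t)).
move: (xchoose (ex s)) (xchoose (ex t)) es et => a c -> ->. done.
Qed.

Lemma dir2 (F H : sgraph) (b : nat) :
  #|vert F| < b -> ~ in_MF F H -> subgraph_of F (join_indep H b).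
Proof.
move=> hb hM.
have [I [[Iind Imax] [g [ginj gadj]]]] : exists I : {set vert F},
    maximal_independent I /\ subgraph_of (induced (~: I)) H.
  apply: NNPP => hn; apply: hM => I mI hs; apply: hn; by exists I.
have hle : #|vert F| <= b by apply: ltnW.
pose f (x : vert F) : vert (join_indep H b) :=
  match insub x with
  | Some s => inl (g s)
  | None => inr (widen_ord hle (enum_rank x))
  end.
exists f; split.
  move=> x y; rewrite /f.
  case: insubP => [s xs xe|xn]; case: insubP => [t ys ye|yn] //=.
  - by move=> [] /ginj e; rewrite -xe -ye e.
  - by move=> [] /ord_inj /enum_rank_inj.
move=> x y /= hxy; rewrite /f.
case: insubP => [s xs xe|xn]; case: insubP => [t ys ye|yn] //=.
- by apply: gadj; rewrite /= /ind_adj xe ye.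
- move: xn yn; rewrite !inE !negbK => xI yI.
  by have := Iind x y xI yI; rewrite hxy.
Qed.

Theorem lemma4p2 (F H : sgraph) (b : nat) :
  almost_bipartite F -> #|vert F| < b ->
  (Ffree F (join_indep H b) <-> in_MF F H).
Proof.
move=> _ hb; split.
  move=> hf; apply: NNPP => hn; apply: hf; exact: dir2 hn.
by move=> hM hs; exact: (dir1 hb hs hM).
Qed.
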